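(* Let $T_1=(V,E_1)$ and $T_2=(V,E_2)$ be trees on the common vertex set $V=\{1,\dots,n\}$. Suppose there are orderings $\pi_1=(\tau_1,\dots,\tau_{n-1})$ of $E_1$ and $\pi_2=(\sigma_1,\dots,\sigma_{n-1})$ of $E_2$ such that $\mathcal{K}_{\pi_1}(T_1)=\mathcal{K}_{\pi_2}(T_2)$ in $\mathbb{C}[S_n]$. Then $E_1=E_2$ (so $T_1=T_2$). Moreover, whenever two distinct edges $(i,j)$ and $(j,k)$ share the endpoint $j$ and $(i,j)$ precedes $(j,k)$ in $\pi_1$, then $(i,j)$ also precedes $(j,k)$ in $\pi_2$.
   Context: $\mathbb{C}[S_n]$ is the group algebra of the symmetric group $S_n$; an edge $(i,j)$ is identified with the transposition $(i\,j)\in S_n$. For a graph $G$ with vertex set labeled by $\{1,\dots,n\}$ and an ordering $\pi=(e_1,\dots,e_m)$ of its edges, $\mathcal{K}_\pi(G)=n!\,(1-e_1)(1-e_2)\cdots(1-e_m)\in\mathbb{C}[S_n]$, the product taken in the order given by $\pi$ (here $1$ is the identity permutation). *)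

(* Defs.v *)
From HB Require Import structures.
From mathcomp Require Import all_boot all_order all_algebra all_fingroup all_field.
Set Implicit Arguments. Unset Strict Implicit. Unset Printing Implicit Defensive.
Import GRing.Theory.
Local Open Scope ring_scope.

(* Vertex set {1,...,n} is modelled by 'I_n = {0,...,n-1}. *)
(* An edge is an ordered pair (i, j) with i < j (normalized); it denotes the
   unordered edge {i, j} and the transposition (i j). *)
Definition edge n := ('I_n * 'I_n)%type.

Definition simple_edges n (E : {set edge n}) : Prop :=
  forall e, e \in E -> (e.1 < e.2)%N.

Definition adj n (E : {set edge n}) : rel 'I_n :=
  fun x y => ((x, y) \in E) || ((y, x) \in E).

Definition connected_graph n (E : {set edge n}) : Prop :=
  forall x y : 'I_n, connect (adj E) x y.

Definition acyclic_graph n (E : {set edge n}) : Prop :=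
  forall s : seq 'I_n, uniq s -> (2 < size s)%N -> ~~ path.cycle (adj E) s.

Definition is_tree n (E : {set edge n}) : Prop :=
  simple_edges E /\ connected_graph E /\ acyclic_graph E.

Definition is_ordering n (E : {set edge n}) (pi : seq (edge n)) : Prop :=
  perm_eq pi (enum E).

(* The group algebra C[S_n], as functions S_n -> C with convolution product. *)
Definition CSn n := {ffun {perm 'I_n} -> algC}.

Definition ga_one n : CSn n := [ffun s => (s == 1%g)%:R].
Definition ga_of_perm n (p : {perm 'I_n}) : CSn n := [ffun s => (s == p)%:R].
Definition ga_sub n (f g : CSn n) : CSn n := [ffun s => f s - g s].
Definition ga_mul n (f g : CSn n) : CSn n :=
  [ffun s => \sum_(a : {perm 'I_n}) f a * g ((a^-1) * s)%g].
Definition ga_scale n (c : algC) (f : CSn n) : CSn n := [ffun s => c * f s].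

Definition transp n (e : edge n) : {perm 'I_n} := tperm e.1 e.2.

Definition Kpi n (pi : seq (edge n)) : CSn n :=
  ga_scale (n`!)%:R
    (foldr (fun e acc => ga_mul (ga_sub (ga_one n) (ga_of_perm (transp e))) acc)
           (ga_one n) pi).

Definition share_endpoint n (e f : edge n) : bool :=
  (e.1 == f.1) || (e.1 == f.2) || (e.2 == f.1) || (e.2 == f.2).

(* Main.v *)
Require Import Defs.
From mathcomp Require Import all_boot all_order all_algebra all_fingroup all_field.
Set Implicit Arguments. Unset Strict Implicit. Unset Printing Implicit Defensive.
Import GRing.Theory Num.Theory.
Local Open Scope ring_scope.

Section Aux.
Variable n : nat.
Implicit Types (E A : {set edge n}) (pi S : seq (edge n)).

Definition Fpi (pi : seq (edge n)) : CSn n :=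
  foldr (fun e acc => ga_mul (ga_sub (ga_one n) (ga_of_perm (transp e))) acc)
        (ga_one n) pi.

Definition Pp (S : seq (edge n)) : {perm 'I_n} :=
  foldr (fun e acc => (acc * transp e)%g) 1%g S.

Fixpoint subs (pi : seq (edge n)) : seq (seq (edge n)) :=
  if pi is e :: pi' then subs pi' ++ map (cons e) (subs pi') else [:: [::]].

Lemma sum_delta (c : {perm 'I_n}) (G : {perm 'I_n} -> algC) :
  \sum_a (a == c)%:R * G a = G c.
Proof.
rewrite (bigD1 c) //= eqxx mul1r big1 ?addr0 // => a /negbTE ->.
by rewrite mul0r.
Qed.

Lemma Fpi_cons e pi s : Fpi (e :: pi) s = Fpi pi s - Fpi pi (transp e * s)%g.
Proof.
rewrite /= /ga_mul ffunE.
under eq_bigr => a _ do rewrite /ga_sub /ga_one /ga_of_perm !ffunE mulrBl.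
rewrite sumrB sum_delta sum_delta invg1 mul1g /transp tpermV //.
Qed.

Lemma coefF pi (p : {perm 'I_n}) : (forall e, e \in pi -> e.1 != e.2) ->
  Fpi pi (p^-1)%g = (-1) ^+ (odd_perm p) * (count (fun S => Pp S == p) (subs pi))%:R.
Proof.
elim: pi p => [|e pi IH] p Hd.
  rewrite /= /ga_one ffunE invg_eq1 addn0 [1%g == p]eq_sym.
  by case: eqP => [->|_]; rewrite ?odd_perm1 ?expr0 ?mul1r ?mulr0.
rewrite Fpi_cons.
have -> : (transp e * p^-1 = (p * transp e)^-1)%g by rewrite invMg /transp tpermV.
have Hd' : forall e', e' \in pi -> e'.1 != e'.2 by move=> e' He'; apply: Hd; rewrite inE He' orbT.
rewrite !IH // odd_permM /transp odd_tperm Hd ?mem_head // signr_addb expr1 mulrN1 mulNr opprK.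
rewrite -mulrDr -natrD /= count_cat count_map.
congr (_ * (_ + _)%:R); apply: eq_count => S /=.
apply/eqP/eqP => H.
  by rewrite H -mulgA tperm2 mulg1.
by rewrite -H -mulgA tperm2 mulg1.
Qed.


Lemma mem_subs pi S : (S \in subs pi) = subseq S pi.
Proof.
elim: pi S => [|e pi IH] S /=; first by rewrite inE; case: S.
rewrite mem_cat IH; case: S => [|x S] /=.
  by rewrite sub0seq.
case: (eqVneq x e) => [->|Hxe].
  rewrite mem_map; last by move=> u v [].
  rewrite IH; apply/orP/idP => [[H|//]|H]; last by right.
  exact: subseq_trans (subseq_cons S e) H.
apply/orP/idP => [[//|/mapP [T _ [E1 _]]]|H]; last by left.
by rewrite E1 eqxx in Hxe.
Qed.

Lemma subseq2 (e f : edge n) pi : e != f -> uniq pi ->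
  subseq [:: e; f] pi = [&& e \in pi, f \in pi & (index e pi < index f pi)%N].
Proof.
move=> Hef; elim: pi => [|x pi IH] //= /andP [Hx Hu].
case: (eqVneq e x) => [<-|Hex].
  rewrite /= !inE eq_sym (negbTE Hef) /= ?eqxx /= sub1seq.
  by rewrite ltnS andbT.
rewrite IH // !in_cons (negbTE Hex) /=.
case: (eqVneq f x) => [Efx|Hfx]; last by rewrite ltnS.
by rewrite Efx (negbTE Hx) !andbF.
Qed.

Definition touched S (x : 'I_n) := has (fun z : edge n => (z.1 == x) || (z.2 == x)) S.

Lemma adjC A x y : adj A x y = adj A y x.
Proof. by rewrite /adj orbC. Qed.

Lemma fix_untouched S x : ~~ touched S x -> Pp S x = x.
Proof.
elim: S => [|e S IH] /=; first by rewrite perm1.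
rewrite negb_or => /andP [H1 H2]; rewrite permM IH // /transp tpermD //.
  by move: H1; rewrite negb_or => /andP [].
by move: H1; rewrite negb_or => /andP [].
Qed.

Lemma conn S x : connect (adj [set z | z \in S]) x (Pp S x).
Proof.
elim: S x => [|e S IH] x /=; first by rewrite perm1 connect0.
rewrite permM; apply: connect_trans (_ : connect _ x (Pp S x)) _.
  apply: connect_sub (IH x) => u v Huv; apply: connect1.
  by move: Huv; rewrite /adj !inE => /orP [->|->]; rewrite ?orbT.
set y := Pp S x; rewrite /transp.
case: (eqVneq y e.1) => [->|H1]; first by rewrite tpermL; apply: connect1; rewrite /adj inE -surjective_pairing mem_head.
case: (eqVneq y e.2) => [->|H2]; first by rewrite tpermR; apply: connect1; rewrite /adj !inE -surjective_pairing eqxx orbT.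
by rewrite tpermD ?connect0 // eq_sym.
Qed.

Lemma acyc E A (a b : 'I_n) : simple_edges E -> acyclic_graph E ->
  (forall z, z \in A -> z \in E) -> (a, b) \in E -> (a, b) \notin A ->
  connect (adj A) a b -> False.
Proof.
move=> Hs Hac HA Hab HnA /connectP [p Hp Hl].
have ltab : (a < b)%N by exact: (Hs _ Hab).
case: (shortenP Hp) Hl => p' Hp' Hu _ Hl.
have Hsub : subrel (adj A) (adj E) by move=> u v; rewrite /adj => /orP [/HA->|/HA->]; rewrite ?orbT.
case: p' Hp' Hu Hl => [|y [|w p'']].
- by move=> _ _ /= Eab; rewrite Eab ltnn in ltab.
- rewrite /= andbT => Hay _ Eby; subst y.
  move: Hay; rewrite /adj => /orP [H|H]; first by rewrite H in HnA.
  by have := Hs _ (HA _ H) => /= /(ltn_trans ltab); rewrite ltnn.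
- move=> Hpath Hu Hl.
  apply: (negP (Hac (a :: y :: w :: p'') Hu isT)).
  rewrite /path.cycle rcons_path (sub_path Hsub Hpath) /=.
  by move: Hl => /= <-; rewrite /adj Hab orbT.
Qed.

Lemma moved E S x : simple_edges E -> acyclic_graph E -> uniq S ->
  {subset S <= E} -> touched S x -> Pp S x != x.
Proof.
move=> Hs Hac; elim: S x => [|e S IH] x //= /andP [HeS Hu] Hsub Htouch.
have HeE : e \in E by apply: Hsub; rewrite mem_head.
have HsubS : {subset S <= E} by move=> z Hz; apply: Hsub; rewrite inE Hz orbT.
have ltab : (e.1 < e.2)%N := Hs _ HeE.
have neab : e.1 != e.2 by rewrite neq_ltn ltab.
rewrite permM /transp; apply/negP => /eqP Hfix.
have Hy : Pp S x = tperm e.1 e.2 x by rewrite -{2}Hfix tpermK.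
have HnA : (e.1, e.2) \notin [set z | z \in S] by rewrite inE -surjective_pairing.
have HE : (e.1, e.2) \in E by rewrite -surjective_pairing.
have HA : forall z, z \in [set z | z \in S] -> z \in E by move=> z; rewrite inE; apply: HsubS.
case Ht: (touched S x).
  have Hm := IH x Hu HsubS Ht.
  case: (eqVneq x e.1) => [Ex|Hx1].
    move: Hy; rewrite Ex tpermL => Hy.
    have := conn S e.1; rewrite Hy => Hc; exact: (acyc Hs Hac HA HE HnA Hc).
  case: (eqVneq x e.2) => [Ex|Hx2].
    move: Hy; rewrite Ex tpermR => Hy.
    have := conn S e.2; rewrite Hy => Hc.
    have Hc' : connect (adj [set z | z \in S]) e.1 e.2.
      by rewrite (sym_connect_sym (@adjC _)) .
    exact: (acyc Hs Hac HA HE HnA Hc').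
  by move: Hm; rewrite Hy tpermD ?eqxx // eq_sym.
move: Hy; rewrite fix_untouched ?Ht // => Hy.
move: Htouch; rewrite Ht orbF => /orP [/eqP Ex|/eqP Ex].
  by move: Hy; rewrite -Ex tpermL => /eqP; rewrite (negbTE neab).
by move: Hy; rewrite -Ex tpermR => /eqP; rewrite eq_sym (negbTE neab).
Qed.

Lemma ord_facts E pi : is_ordering E pi -> uniq pi /\ (pi =i E).
Proof.
move=> Ho; split; first by rewrite (perm_uniq Ho) enum_uniq.
by move=> z; rewrite (perm_mem Ho) mem_enum.
Qed.

Lemma tp_moved (a b x : 'I_n) : tperm a b x != x -> (x == a) || (x == b).
Proof.
case: (eqVneq x a) => // Hxa; case: (eqVneq x b) => // Hxb.
by rewrite tpermD ?eqxx // eq_sym.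
Qed.

Lemma part1 E pi (a b : 'I_n) S : simple_edges E -> acyclic_graph E ->
  is_ordering E pi -> (a < b)%N -> S \in subs pi -> Pp S = tperm a b -> (a, b) \in E.
Proof.
move=> Hs Hac Ho ltab; rewrite mem_subs => Hss HP.
have [Hu Hm] := ord_facts Ho.
have HuS := subseq_uniq Hss Hu.
have HsubS : {subset S <= E} by move=> z /(mem_subseq Hss); rewrite Hm.
have Hmv : forall x, touched S x -> tperm a b x != x.
  by move=> x Ht; rewrite -HP; exact: (moved Hs Hac).
case: S Hss HP HuS HsubS Hmv => [|[z1 z2] S'] Hss HP HuS HsubS Hmv.
  have := congr1 (fun s : {perm 'I_n} => s a) HP.
  by rewrite /= perm1 tpermL => Eab; rewrite Eab ltnn in ltab.
have HzE : (z1, z2) \in E := HsubS _ (mem_head _ _).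
have ltz : (z1 < z2)%N := Hs _ HzE.
have t1 : touched [:: (z1, z2) & S'] z1 by rewrite /= eqxx.
have t2 : touched [:: (z1, z2) & S'] z2 by rewrite /= eqxx orbT.
have H1 := tp_moved (Hmv z1 t1).
have H2 := tp_moved (Hmv z2 t2).
move: H1 H2 ltz HzE; case/orP => /eqP ->; case/orP => /eqP -> //; rewrite ?ltnn //.
by move=> /(ltn_trans ltab); rewrite ltnn.
Qed.

Definition edge_is (z : edge n) (a b : 'I_n) := (z == (a, b)) || (z == (b, a)).

Lemma edge_is_tp z a b : edge_is z a b -> transp z = tperm a b.
Proof. by case/orP => /eqP ->; rewrite /transp // tpermC. Qed.

Lemma share_ijk (e f : edge n) : (e.1 < e.2)%N -> (f.1 < f.2)%N -> e != f ->
  share_endpoint e f ->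
  exists i j k, [/\ i != j, j != k, i != k, edge_is e i j & edge_is f j k].
Proof.
case: e => e1 e2; case: f => f1 f2 /= le lf Hef.
have nord : forall u v : 'I_n, (u < v)%N -> u != v by move=> u v; rewrite neq_ltn => ->.
rewrite /share_endpoint /= -!orbA; case/or4P => /eqP E.
- subst f1; exists e2, e1, f2; split; rewrite /edge_is ?eqxx ?orbT //.
  + by rewrite eq_sym nord.
  + by rewrite nord.
  + by apply/eqP => E2; subst; rewrite eqxx in Hef.
- subst f2; exists e2, e1, f1; split; rewrite /edge_is ?eqxx ?orbT //.
  + by rewrite eq_sym nord.
  + by rewrite eq_sym nord.
  + apply/eqP => E2; subst; by have := ltn_trans le lf; rewrite ltnn.
- subst f1; exists e1, e2, f2; split; rewrite /edge_is ?eqxx ?orbT //.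
  + by rewrite nord.
  + by rewrite nord.
  + apply/eqP => E2; subst; by have := ltn_trans le lf; rewrite ltnn.
- subst f2; exists e1, e2, f1; split; rewrite /edge_is ?eqxx ?orbT //.
  + by rewrite nord.
  + by rewrite eq_sym nord.
  + by apply/eqP => E2; subst; rewrite eqxx in Hef.
Qed.

Lemma part2 E pi (e f : edge n) (i j k : 'I_n) S :
  simple_edges E -> acyclic_graph E -> is_ordering E pi ->
  e \in E -> f \in E -> e != f -> i != j -> j != k -> i != k ->
  edge_is e i j -> edge_is f j k -> S \in subs pi ->
  Pp S = (tperm j k * tperm i j)%g -> S = [:: e; f].
Proof.
move=> Hs Hac Ho HeE HfE Hef Hij Hjk Hik Hei Hfj; rewrite mem_subs => Hss HP.
have [Hu Hm] := ord_facts Ho.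
have HuS := subseq_uniq Hss Hu.
have HsubS : {subset S <= E} by move=> z /(mem_subseq Hss); rewrite Hm.
have Te := edge_is_tp Hei; have Tf := edge_is_tp Hfj.
set c := (tperm j k * tperm i j)%g in HP.
have cj : c j = k by rewrite permM tpermL tpermD // eq_sym.
have Hji : j != i by rewrite eq_sym.
have Hki : k != i by rewrite eq_sym.
have Hkj : k != j by rewrite eq_sym.
have ci : c i = j by rewrite /c permM (@tpermD _ j k i) ?tpermL.
have ck : c k = i by rewrite /c permM tpermR tpermR.
have cmv : forall x, c x != x -> [|| x == i, x == j | x == k].
  move=> x; rewrite /c permM; case: (eqVneq x i) => // Hxi.
  case: (eqVneq x j) => // Hxj; case: (eqVneq x k) => // Hxk.
  by rewrite tpermD ?tpermD ?eqxx // eq_sym.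
have Hmv : forall x, touched S x -> [|| x == i, x == j | x == k].
  by move=> x Ht; apply: cmv; rewrite -HP; exact: (moved Hs Hac).
set A := [set e; f].
have HA : forall z, z \in A -> z \in E by move=> z; rewrite !inE => /orP [] /eqP ->.
have adjA : forall x y, edge_is e x y || edge_is f x y -> adj A x y.
  move=> x y; rewrite /edge_is /adj !inE.
  by case/orP => /orP [] /eqP <-; rewrite eqxx ?orbT.
have cj_all : forall x, [|| x == i, x == j | x == k] -> connect (adj A) j x.
  move=> x /or3P [] /eqP ->; rewrite ?connect0 //; apply: connect1; apply: adjA.
  - by move: Hei; rewrite /edge_is orbC => ->.
  - by rewrite Hfj orbT.
have Hzin : forall z, z \in S -> (z == e) || (z == f).
  move=> [z1 z2] Hz; apply/negPn/negP => Hn.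
  have HzE := HsubS _ Hz.
  have Hn' : (z1, z2) \notin A by rewrite !inE.
  apply: (acyc Hs Hac HA HzE Hn').
  have t1 : touched S z1 by apply/hasP; exists (z1, z2); rewrite //= eqxx.
  have t2 : touched S z2 by apply/hasP; exists (z1, z2); rewrite //= eqxx orbT.
  apply: connect_trans (_ : connect _ z1 j) (cj_all _ (Hmv _ t2)).
  by rewrite (sym_connect_sym (@adjC _)); apply: cj_all; apply: Hmv.
have Hsz : (size S <= size [:: e; f])%N.
  by apply: uniq_leq_size => // z /Hzin; rewrite !inE.
have Pcj : Pp S j = k by rewrite HP.
have Pci : Pp S i = j by rewrite HP.
have ei : transp e j = i by rewrite Te tpermR.
clear HsubS Hmv. case: S Hss HP Hzin HuS Hsz Pcj Pci => [|x [|y [|w S']]] _ HP Hzin HuS Hsz Pcj Pci //.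
- by move: Pcj; rewrite /= perm1 => /eqP; rewrite (negbTE Hjk).
- move: Pcj Pci; rewrite /= !permM !perm1.
  case/orP: (Hzin x (mem_head _ _)) => /eqP ->.
    by rewrite Te tpermR => /eqP; rewrite (negbTE Hik).
  by rewrite Tf (@tpermD _ j k i) // => _ /eqP; rewrite (negbTE Hij).
- have Hy : y \in [:: x; y] by rewrite !inE eqxx orbT.
  move: Pcj HuS; rewrite /= inE andbT.
  case/orP: (Hzin x (mem_head _ _)) => /eqP ->;
  case/orP: (Hzin y Hy) => /eqP -> //; rewrite ?eqxx //.
  rewrite !permM perm1 Te Tf tpermR (@tpermD _ j k i) //.
  by move=> /eqP; rewrite (negbTE Hik).
Qed.

Lemma incl E E' pi pi' : simple_edges E -> simple_edges E' -> acyclic_graph E' ->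
  is_ordering E pi -> is_ordering E' pi' ->
  (forall p, has (fun S => Pp S == p) (subs pi) = has (fun S => Pp S == p) (subs pi')) ->
  {subset E <= E'}.
Proof.
move=> Hs Hs' Ha' Ho Ho' Hc [a b] Hz.
have ltab : (a < b)%N := Hs _ Hz.
have [Hu Hm] := ord_facts Ho.
have : has (fun S => Pp S == tperm a b) (subs pi).
  apply/hasP; exists [:: (a, b)]; first by rewrite mem_subs sub1seq Hm.
  by rewrite /Pp /= mul1g.
rewrite Hc => /hasP [S HS /eqP HP]; exact: (part1 Hs' Ha' Ho' ltab HS HP).
Qed.

End Aux.

Theorem mainTheorem7 (n : nat) (E1 E2 : {set edge n})
  (pi1 pi2 : seq (edge n)) :
  is_tree E1 -> is_tree E2 ->
  is_ordering E1 pi1 -> is_ordering E2 pi2 ->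
  Kpi pi1 = Kpi pi2 ->
  E1 = E2 /\
  (forall e f : edge n, e \in E1 -> f \in E1 -> e != f -> share_endpoint e f ->
     (index e pi1 < index f pi1)%N -> (index e pi2 < index f pi2)%N).
Proof.
move=> [Hs1 [_ Ha1]] [Hs2 [_ Ha2]] Ho1 Ho2 HK.
have [Hu1 Hm1] := ord_facts Ho1; have [Hu2 Hm2] := ord_facts Ho2.
have Hd1 : forall e, e \in pi1 -> e.1 != e.2.
  by move=> e; rewrite Hm1 => /Hs1; rewrite neq_ltn => ->.
have Hd2 : forall e, e \in pi2 -> e.1 != e.2.
  by move=> e; rewrite Hm2 => /Hs2; rewrite neq_ltn => ->.
have Kf : forall pi : seq (edge n), Kpi pi = ga_scale (n`!)%:R (Fpi pi) by move=> pi; reflexivity.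
have Hcnt : forall p, has (fun S => Pp S == p) (subs pi1) = has (fun S => Pp S == p) (subs pi2).
  move=> p; rewrite !has_count.
  have := congr1 (fun F : CSn n => F (p^-1)%g) HK.
  rewrite /= !Kf /ga_scale !ffunE !coefF //.
  have nf : (n`!)%:R != 0 :> algC by rewrite pnatr_eq0 -lt0n fact_gt0.
  move/(mulfI nf)/(mulfI (negbT (signr_eq0 _ _)))/eqP; rewrite eqr_nat => /eqP -> //.
have E12 : E1 = E2.
  apply/setP => z; apply/idP/idP => Hz.
    exact: (incl Hs1 Hs2 Ha2 Ho1 Ho2 Hcnt).
  by apply: (incl Hs2 Hs1 Ha1 Ho2 Ho1 _ Hz) => p; rewrite Hcnt.
split => // e f He Hf Hef Hsh Hidx.
have [i [j [k [Hij Hjk Hik Hei Hfj]]]] := share_ijk (Hs1 _ He) (Hs1 _ Hf) Hef Hsh.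
have : has (fun S => Pp S == (tperm j k * tperm i j)%g) (subs pi1).
  apply/hasP; exists [:: e; f].
    by rewrite mem_subs subseq2 // !Hm1 He Hf.
  by rewrite /Pp /= mul1g (edge_is_tp Hei) (edge_is_tp Hfj).
rewrite Hcnt => /hasP [S HS /eqP HP].
rewrite E12 in He Hf.
have ES := part2 Hs2 Ha2 Ho2 He Hf Hef Hij Hjk Hik Hei Hfj HS HP.
move: HS; rewrite ES mem_subs subseq2 // => /and3P [_ _ ->] //.
Qed.
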